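(* Let $F$ be a field of characteristic $0$, $n\ge 3$, and $f\in T_n$. Let $\pi:F[x_1,\dots,x_n]\to F[x_1,\dots,x_{n-2}]$ be the homomorphism with $\pi(x_{n-1})=\pi(x_n)=0$ and $\pi(x_k)=x_k$ for $k\le n-2$, and write $\overline{p_k}=x_1^k+\dots+x_{n-2}^k$. Suppose there is a polynomial $g\in F[y_1,y_3,y_5,\dots]$ (finitely many variables) with $\pi(f)=g(\overline{p_1},\overline{p_3},\overline{p_5},\dots)$. Then $f-g(p_1,p_3,p_5,\dots)$ is divisible by $\delta=\prod_{1\le k<\ell\le n}(x_k+x_\ell)$.
   Context: $p_k=x_1^k+\dots+x_n^k$. A polynomial $p\in F[x_1,\dots,x_n]$ is monotypically supersymmetric if it is symmetric and, after substituting $x_1=t,\ x_2=-t$, the result does not depend on $t$; $T_n$ is the algebra of such polynomials. *)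

(* Defs.v *)
From mathcomp Require Import all_boot all_order all_algebra.
From mathcomp Require Import mpoly.
Set Implicit Arguments. Unset Strict Implicit. Unset Printing Implicit Defensive.
Import GRing.Theory.
Local Open Scope ring_scope.

(* Variables x_1..x_n are 'X_0 .. 'X_(n-1). *)

Definition psum (F : fieldType) (n k : nat) : {mpoly F[n]} :=
  \sum_(i < n) 'X_i ^+ k.

(* substitution x_1 = t, x_2 = -t (t realized as the variable 'X_0,
   which no longer occurs otherwise), other variables unchanged;
   the sum below is just 'X_0 (n >= 1 here since some i : 'I_n exists) *)
Definition subst_t (F : fieldType) (n : nat) (f : {mpoly F[n]}) : {mpoly F[n]} :=
  f \mPo [tuple (if val i == 1%N then - (\sum_(k < n | val k == 0%N) 'X_k)
                 else 'X_i) | i < n].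

Definition subst_0 (F : fieldType) (n : nat) (f : {mpoly F[n]}) : {mpoly F[n]} :=
  f \mPo [tuple (if (val i < 2)%N then 0 else 'X_i) | i < n].

(* monotypically supersymmetric: symmetric, and after x_1 = t, x_2 = -t the
   result does not depend on t (i.e. equals its value at t = 0) *)
Definition mono_supersym (F : fieldType) (n : nat) (f : {mpoly F[n]}) : Prop :=
  f \is symmetric /\ subst_t f = subst_0 f.

(* pi : (the sum is 'X_i if i < n-2 and 0 otherwise) x_k |-> x_k for k <= n-2, x_(n-1), x_n |-> 0 *)
Definition proj2 (F : fieldType) (n : nat) (f : {mpoly F[n]}) : {mpoly F[n - 2]} :=
  f \mPo [tuple (\sum_(k < n - 2 | val k == val i) 'X_k) | i < n].

(* g(p_1, p_3, p_5, ...) : variable j of g is y_(2j+1) *)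
Definition odd_psum_eval (F : fieldType) (m n : nat) (g : {mpoly F[m]}) : {mpoly F[n]} :=
  g \mPo [tuple psum F n (2 * val j).+1 | j < m].

Definition delta (F : fieldType) (n : nat) : {mpoly F[n]} :=
  \prod_(k < n) \prod_(l < n | (k < l)%N) ('X_k + 'X_l).

(* Main.v *)
Require Import Defs.
From mathcomp Require Import all_boot all_order all_algebra.
From mathcomp Require Import mpoly.
From mathcomp Require Import fingroup perm ring zify.
Set Implicit Arguments. Unset Strict Implicit. Unset Printing Implicit Defensive.
Import GRing.Theory.
Local Open Scope ring_scope.

Section Aux.
Variable F : fieldType.

Lemma compX (n k : nat) (t : n.-tuple {mpoly F[k]}) i : 'X_i \mPo t = tnth t i.
Proof. by rewrite comp_mpolyXU -tnth_nth. Qed.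

Lemma comp_ext (n k : nat) (p : {mpoly F[n]}) (t u : n.-tuple {mpoly F[k]}) :
  (forall i, tnth t i = tnth u i) -> p \mPo t = p \mPo u.
Proof. by move=> H; congr (_ \mPo _); apply: eq_from_tnth. Qed.

Lemma comp_assoc (n k l : nat) (p : {mpoly F[n]}) (t : n.-tuple {mpoly F[k]})
   (u : k.-tuple {mpoly F[l]}) :
  (p \mPo t) \mPo u = p \mPo [tuple (tnth t i \mPo u) | i < n].
Proof.
rewrite [p \mPo t]comp_mpolyE [RHS]comp_mpolyE raddf_sum; apply: eq_bigr => m _.
rewrite /= comp_mpolyZ rmorph_prod; congr (_ *: _); apply: eq_bigr => i _.
by rewrite rmorphXn tnth_mktuple.
Qed.

Lemma sym_perm (n k : nat) (p : {mpoly F[n]}) (t : n.-tuple {mpoly F[k]}) (s : 'S_n) :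
  p \is symmetric -> p \mPo t = p \mPo [tuple tnth t (s i) | i < n].
Proof. by move/issymP=> H; rewrite -msym_mPo H. Qed.

Definition mcong (n : nat) (d a b : {mpoly F[n]}) := exists q, a - b = d * q.

Lemma cong_refl n (d a : {mpoly F[n]}) : mcong d a a.
Proof. by exists 0; rewrite subrr mulr0. Qed.

Lemma cong_add n (d a b c e : {mpoly F[n]}) : mcong d a b -> mcong d c e -> mcong d (a + c) (b + e).
Proof. by move=> [q1 H1] [q2 H2]; exists (q1 + q2); rewrite mulrDr -H1 -H2; ring. Qed.

Lemma cong_mul n (d a b c e : {mpoly F[n]}) : mcong d a b -> mcong d c e -> mcong d (a * c) (b * e).
Proof.
move=> [q1 H1] [q2 H2]; exists (q1 * c + b * q2).
by rewrite mulrDr mulrA -H1 mulrCA -H2; ring.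
Qed.

Lemma cong_scale n (d a b : {mpoly F[n]}) c : mcong d a b -> mcong d (c *: a) (c *: b).
Proof. by move=> [q H]; exists (c *: q); rewrite -scalerBr H scalerAr. Qed.

Lemma cong_exp n (d a b : {mpoly F[n]}) m : mcong d a b -> mcong d (a ^+ m) (b ^+ m).
Proof.
move=> H; elim: m => [|m IH]; first by rewrite !expr0; apply: cong_refl.
by rewrite !exprS; apply: cong_mul.
Qed.

Lemma core_div (n : nat) (l : 'I_n) (c : {mpoly F[n]}) (p : {mpoly F[n]}) :
  p \mPo [tuple (if i == l then c else 'X_i) | i < n] = 0 ->
  exists q, p = ('X_l - c) * q.
Proof.
move=> H.
suff [q Hq] : mcong ('X_l - c) p (p \mPo [tuple (if i == l then c else 'X_i) | i < n]).
  by exists q; rewrite -Hq H subr0.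
rewrite -{1}(comp_mpoly_id p) !comp_mpolyE.
apply: (big_ind2 (mcong ('X_l - c))); first exact: cong_refl.
  by move=> *; apply: cong_add.
move=> m _; apply: cong_scale.
apply: (big_ind2 (mcong ('X_l - c))).
- exact: cong_refl.
- by move=> *; apply: cong_mul.
move=> i _; apply: cong_exp; rewrite !tnth_mktuple.
case: eqP => [->|_]; first by exists 1; rewrite mulr1.
exact: cong_refl.
Qed.

Lemma X_plus_nz n (a : 'I_n) (e : {mpoly F[n]}) : e@_U_(a) = 0 -> 'X_a + e != 0.
Proof.
move=> He; apply/negP => /eqP H; have := congr1 (mcoeff U_(a)) H.
by rewrite mcoeffD mcoeffXU eqxx He mcoeff0 addr0 => /eqP; rewrite oner_eq0.
Qed.

Lemma coefXU_ne n (a b : 'I_n) : b != a -> ('X_b : {mpoly F[n]})@_U_(a) = 0.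
Proof. by move/negbTE=> H; rewrite mcoeffXU H. Qed.

Definition msig n (k l : 'I_n) : n.-tuple {mpoly F[n]} :=
  [tuple (if i == l then - 'X_k else 'X_i) | i < n].

Definition Dp n (p : 'I_n * 'I_n) : {mpoly F[n]} := 'X_p.1 + 'X_p.2.
Definition Pp n (p : 'I_n * 'I_n) : bool := (p.1 < p.2)%N.

Lemma Dp_sig_nz n (p p' : 'I_n * 'I_n) : Pp p -> Pp p' -> p != p' ->
  Dp p \mPo msig p'.1 p'.2 != 0.
Proof.
case: p => a b; case: p' => k l; rewrite /Pp /Dp /= => ab kl neq.
rewrite comp_mpolyD !compX /msig !tnth_mktuple.
have ne_ab : b != a by apply/eqP => E; move: ab; rewrite E ltnn.
have ne_kl : l != k by apply/eqP => E; move: kl; rewrite E ltnn.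
case: (eqVneq a l) => [Eal|Nal].
  rewrite (negbTE (_ : b != l)); last by rewrite -Eal.
  rewrite addrC; apply: X_plus_nz; rewrite mcoeffN coefXU_ne ?oppr0 //.
  apply/eqP => E; move: ab; rewrite Eal -E => H.
  by move: (ltn_trans kl H); rewrite ltnn.
case: (eqVneq b l) => [Ebl|Nbl].
  apply: X_plus_nz; rewrite mcoeffN coefXU_ne ?oppr0 //.
  apply/eqP => E; move: neq; by rewrite Ebl E eqxx.
by apply: X_plus_nz; rewrite coefXU_ne.
Qed.

Lemma pairs_div n (r : seq ('I_n * 'I_n)) : uniq r -> forall h : {mpoly F[n]},
  (forall p, p \in r -> Pp p -> h \mPo msig p.1 p.2 = 0) ->
  exists q, h = q * \prod_(p <- r | Pp p) Dp p.
Proof.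
elim: r => [|p r IH] /=.
  by move=> _ h _; exists h; rewrite big_nil mulr1.
move=> /andP [pr ur] h H; rewrite big_cons.
case: ifP => Pp_p; last first.
  apply: IH => // p' p'r; apply: H; by rewrite in_cons p'r orbT.
have [q1 Hq1] : exists q1, h = ('X_p.2 - - 'X_p.1) * q1.
  apply: core_div; exact: (H p (mem_head _ _) Pp_p).
have Hq1' : h = Dp p * q1 by rewrite Hq1 opprK addrC.
have [q Hq] : exists q, q1 = q * \prod_(p0 <- r | Pp p0) Dp p0.
  apply: IH => // p' p'r Pp'.
  have := H p'; rewrite in_cons p'r orbT => /(_ isT Pp').
  rewrite Hq1' rmorphM /= => /eqP; rewrite mulf_eq0 => /orP [|/eqP //].
  move=> /eqP E; exfalso; move: (Dp_sig_nz Pp_p Pp').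
  rewrite E eqxx => K; suff Hne : p != p' by move: (K Hne).
  by apply/eqP => Epp; move: pr; rewrite Epp p'r.
by exists q; rewrite Hq1' Hq mulrCA.
Qed.

Lemma delta_div n (h : {mpoly F[n]}) :
  (forall k l : 'I_n, (k < l)%N -> h \mPo msig k l = 0) ->
  exists q, h = q * delta F n.
Proof.
move=> H; rewrite /delta pair_big_dep /=.
have := @pairs_div n (index_enum _) (index_enum_uniq _) h.
apply => p _ Pp_p; exact: H.
Qed.

Lemma perm2 n (a b k l : 'I_n) : a != b -> k != l ->
  exists s : 'S_n, s a = k /\ s b = l.
Proof.
move=> ab kl; set t := tperm a k.
exists (t * tperm (t b) l)%g; rewrite !permM.
have ta : t a = k by rewrite /t tpermL.
have tbk : t b != k.
  apply/eqP => E; move: ab => /negP; apply; apply/eqP.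
  apply: (@perm_inj _ t); by rewrite ta.
rewrite ta tpermL; split => //.
by rewrite tpermD // eq_sym.
Qed.

Lemma sum_pred1 n k (c : nat) (j0 : 'I_n) (G : 'I_n -> {mpoly F[k]}) : val j0 = c ->
  \sum_(j < n | val j == c) G j = G j0.
Proof.
move=> Hj; rewrite (big_pred1 j0) // => j /=.
by rewrite -(inj_eq val_inj) /= Hj.
Qed.

Lemma vanish n (h : {mpoly F[n]}) (n2 : (2 <= n)%N) :
  h \is symmetric -> subst_t h = subst_0 h -> proj2 h = 0 ->
  forall k l : 'I_n, (k < l)%N -> h \mPo msig k l = 0.
Proof.
move=> hsym hst hpr k l kl.
have h0 : (0 < n)%N by apply: leq_trans n2.
have h1 : (1 < n)%N by [].
pose i0 := Ordinal h0; pose i1 := Ordinal h1.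
have ne01 : i0 != i1 by [].
have nekl : k != l by apply/eqP => E; move: kl; rewrite E ltnn.
have [s [s0 s1]] := perm2 ne01 nekl.
pose W := [tuple 'X_(s i) | i < n] : n.-tuple {mpoly F[n]}.
rewrite (sym_perm _ s hsym).
have -> : h \mPo [tuple tnth (msig k l) (s i) | i < n] = subst_t h \mPo W.
  rewrite /subst_t comp_assoc; apply: comp_ext => i.
  rewrite !tnth_mktuple.

  case: (eqVneq (val i) 1%N) => [vi|vi].
    have -> : i = i1 by apply: val_inj.
    rewrite s1 eqxx (@sum_pred1 n n 0 i0 (fun j => 'X_j)) //.
    by rewrite comp_mpolyN compX tnth_mktuple s0.
  have -> : (s i == l) = false.
    apply/negbTE; rewrite -s1 (inj_eq (@perm_inj _ s)).
    by apply/eqP => E; move: vi; rewrite E eqxx.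
  by rewrite compX tnth_mktuple.
rewrite hst /subst_0 comp_assoc.
have n2' : (n - 2 < n)%N by rewrite ltn_subrL.
have n1' : (n - 1 < n)%N by rewrite ltn_subrL.
pose im2 := Ordinal n2'; pose im1 := Ordinal n1'.
have ne21 : im2 != im1 by rewrite -(inj_eq val_inj) /=; apply/eqP; lia.
have [r [r2 r1]] := perm2 ne21 ne01.
rewrite (sym_perm _ r hsym).
have le : (n - 2 <= n)%N by rewrite leq_subr.
pose E := [tuple 'X_(s (r (widen_ord le j))) | j < n - 2] : (n-2).-tuple {mpoly F[n]}.
have key : forall i : 'I_n, (val (r i) < 2)%N = (n - 2 <= val i)%N.
  move=> i.
  have -> : (val (r i) < 2)%N = (r i == i0) || (r i == i1).
    rewrite -!(inj_eq val_inj) /=; case: (val (r i)) => [|[|m]] //.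
  rewrite -r2 -r1 !(inj_eq (@perm_inj _ r)) -!(inj_eq val_inj) /=.
  case: i => i Hi /=; apply/idP/idP; first by move=> /orP [] /eqP; lia.
  move=> H; apply/orP; case: (ltnP i (n - 1)) => H2; [left|right]; apply/eqP; lia.
transitivity (proj2 h \mPo E); last by rewrite hpr comp_mpoly0.
  rewrite /proj2 comp_assoc; apply: comp_ext => i.
  rewrite !tnth_mktuple key raddf_sum /=.
  case: (leqP (n - 2) (val i)) => Hi.
    rewrite comp_mpoly0 big_pred0 // => j /=.
    apply/negbTE/eqP => E0; move: (ltn_ord j); rewrite E0.
    change (\val i) with (nat_of_ord i) in Hi; lia.
  rewrite (big_pred1 (Ordinal Hi)); last by move=> j /=; rewrite -(inj_eq val_inj).
  rewrite (compX E) tnth_mktuple (compX W) tnth_mktuple.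
  by congr 'X_(s (r _)); apply: val_inj.
Qed.

Lemma msym_comp n (s : 'S_n) (p : {mpoly F[n]}) : msym s p = p \mPo [tuple 'X_(s i) | i < n].
Proof.
rewrite -[LHS]comp_mpoly_id msym_mPo; apply: comp_ext => i.
by rewrite !tnth_mktuple.
Qed.

Lemma psum_sym n k : psum F n k \is symmetric.
Proof.
apply/issymP => s; rewrite msym_comp /psum rmorph_sum /=.
under eq_bigr do rewrite rmorphXn /= compX tnth_mktuple.
by rewrite [RHS](reindex_inj (@perm_inj _ s)).
Qed.

Lemma G_sym m n (g : {mpoly F[m]}) : odd_psum_eval n g \is symmetric.
Proof.
apply: mcomp_sym => i; rewrite -tnth_nth tnth_mktuple; exact: psum_sym.
Qed.

Lemma neg_odd n (x : {mpoly F[n]}) j : (- x) ^+ (2 * j).+1 = - x ^+ (2 * j).+1.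
Proof. by rewrite exprNn -signr_odd oddS oddM andFb expr1 mulN1r. Qed.

Lemma psum_comp n k l (t : n.-tuple {mpoly F[l]}) :
  psum F n k \mPo t = \sum_(i < n) tnth t i ^+ k.
Proof.
rewrite /psum rmorph_sum /=; apply: eq_bigr => i _.
by rewrite rmorphXn /= compX.
Qed.

Lemma split2 n (i0 i1 : 'I_n) (G : 'I_n -> {mpoly F[n]}) : i0 != i1 ->
  \sum_(i < n) G i = G i0 + G i1 + \sum_(i < n | (i != i0) && (i != i1)) G i.
Proof.
move=> ne; rewrite (bigD1 i0) //= (bigD1 i1) //=; last by rewrite eq_sym.
by rewrite addrA.
Qed.

Lemma G_super m n (g : {mpoly F[m]}) (n2 : (2 <= n)%N) :
  subst_t (odd_psum_eval n g) = subst_0 (odd_psum_eval n g).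
Proof.
rewrite /subst_t /subst_0 /odd_psum_eval !comp_assoc; apply: comp_ext => j.
rewrite !tnth_mktuple !psum_comp.
have h0 : (0 < n)%N by apply: leq_trans n2.
have h1 : (1 < n)%N by [].
pose i0 := Ordinal h0; pose i1 := Ordinal h1.
have ne01 : i0 != i1 by [].
rewrite (split2 _ ne01) [RHS](split2 _ ne01).
rewrite !tnth_mktuple.
have -> : (\val i0 == 1%N) = false by [].
have -> : (\val i1 == 1%N) = true by [].
have -> : (\val i0 < 2)%N = true by [].
have -> : (\val i1 < 2)%N = true by [].
rewrite (@sum_pred1 n n 0 i0 (fun j => 'X_j)) // neg_odd subrr add0r.
rewrite expr0n add0r (_ : ((2 * \val j).+1 == 0%N) = false) // mulr0n add0r.
apply: eq_bigr => i /andP [Hi0 Hi1].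
rewrite !tnth_mktuple.
have -> : (val i == 1%N) = false by apply/negbTE; move: Hi1; rewrite -(inj_eq val_inj).
have -> : (val i < 2)%N = false.
  move: Hi0 Hi1; rewrite -!(inj_eq val_inj) /=; case: i => [[|[|i]]] //.
by [].
Qed.

Lemma psum_proj n m k (le : (m <= n)%N) : (0 < k)%N ->
  psum F n k \mPo [tuple (\sum_(j < m | val j == val i) 'X_j) | i < n] = psum F m k.
Proof.
move=> k0; rewrite psum_comp.
have -> : \sum_(i < n) tnth [tuple (\sum_(j < m | val j == val i) 'X_j) | i < n] i ^+ k
   = \sum_(i < n) \sum_(j < m | val j == val i) ('X_j ^+ k : {mpoly F[m]}).
  apply: eq_bigr => i _; rewrite tnth_mktuple.
  case: (ltnP (val i) m) => Hi.
    rewrite (@sum_pred1 m m (val i) (Ordinal Hi) (fun j => 'X_j)) //.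
    by rewrite (@sum_pred1 m m (val i) (Ordinal Hi) (fun j => 'X_j ^+ k)).
  rewrite !big_pred0 ?expr0n; first by rewrite (_ : (k == 0%N) = false) ?mulr0n //; case: k k0.
    move=> j; apply/negbTE/eqP => E0; move: (ltn_ord j); rewrite E0.
    by move=> H; move: Hi; rewrite leqNgt H.
  move=> j; apply/negbTE/eqP => E0; move: (ltn_ord j); rewrite E0.
  by move=> H; move: Hi; rewrite leqNgt H.
rewrite (exchange_big_dep xpredT) //=; rewrite /psum; apply: eq_bigr => j _.
rewrite (big_pred1 (widen_ord le j)) // => i /=.
Qed.
End Aux.

Unset Implicit Arguments.
Set Strict Implicit.

Theorem mainTheorem6 (F : fieldType) (n : nat) (f : {mpoly F[n]})
  (m : nat) (g : {mpoly F[m]}) :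
  [pchar F] =i pred0 ->
  (3 <= n)%N ->
  mono_supersym f ->
  proj2 f = odd_psum_eval (n - 2) g ->
  exists q : {mpoly F[n]}, f - odd_psum_eval n g = q * delta F n.
Proof.
move=> _ n3 [fsym fst] fpr.
have n2 : (2 <= n)%N by apply: ltnW.
set G := odd_psum_eval n g.
apply: delta_div; apply: vanish => //.
- by apply: rpredB => //; apply: G_sym.
- have E1 : forall p q : {mpoly F[n]}, subst_t (p - q) = subst_t p - subst_t q.
    by move=> p q; rewrite /subst_t comp_mpolyB.
  have E2 : forall p q : {mpoly F[n]}, subst_0 (p - q) = subst_0 p - subst_0 q.
    by move=> p q; rewrite /subst_0 comp_mpolyB.
  by rewrite E1 E2 fst G_super.
- have E1 : forall p q : {mpoly F[n]}, proj2 (p - q) = proj2 p - proj2 q.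
    by move=> p q; rewrite /proj2 comp_mpolyB.
  rewrite E1 fpr; apply/eqP; rewrite subr_eq0; apply/eqP.
  rewrite /G /proj2 /odd_psum_eval comp_assoc; apply: comp_ext => j.
  by rewrite !tnth_mktuple psum_proj // leq_subr.
Qed.
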